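(* There is a homomorphism from the Grötzsch graph $M(C_5)$ to $S_4$.
   Context: For a graph $G$ and positive integer $r$, the generalized Mycielskian $M_r(G)$ has vertex set $\{(v,i):v\in V(G),0\le i\le r-1\}\cup\{z\}$, with $(u,i)$ adjacent to $(v,j)$ iff $\{u,v\}\in E(G)$ and ($|i-j|=1$ or $i=j=0$), and $z$ adjacent to all $(v,r-1)$, $v\in V(G)$. $M(G)=M_2(G)$; the Grötzsch graph is $M(C_5)$ where $C_5$ is the $5$-cycle. The symmetric shift graph $S_m$ has vertex set $\{(i,j):1\le i,j\le m,\ i\ne j\}$, and $(i,j)$ is adjacent to $(k,\ell)$ iff $j=k$ or $i=\ell$. *)

(* Defs.v *)
From mathcomp Require Import all_boot.
Set Implicit Arguments. Unset Strict Implicit. Unset Printing Implicit Defensive.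

(* A graph is a vertex finType together with a (symmetric, irreflexive) adjacency relation. *)

Definition is_hom (V W : finType) (eV : rel V) (eW : rel W) (f : V -> W) : Prop :=
  forall x y, eV x y -> eW (f x) (f y).

Definition cycle_adj (n : nat) : rel 'I_n :=
  fun i j => (j == (i.+1 %% n) :> nat) || (i == (j.+1 %% n) :> nat).

(* Generalized Mycielskian M_r(G): vertex (v,i) is Some (v,i), the apex z is None. *)
Definition myc_vertex (V : finType) (r : nat) : finType := option (V * 'I_r).

Definition myc_adj (V : finType) (e : rel V) (r : nat) : rel (myc_vertex V r) :=
  fun a b =>
    match a, b with
    | Some (u, i), Some (v, j) =>
        e u v && [|| (i.+1 == j :> nat), (j.+1 == i :> nat) |
                     (i == 0 :> nat) && (j == 0 :> nat)]
    | None, Some (_, j) => (j == r.-1 :> nat)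
    | Some (_, i), None => (i == r.-1 :> nat)
    | None, None => false
    end.

(* The Groetzsch graph M(C_5) = M_2(C_5). *)
Definition grotzsch_vertex : finType := myc_vertex 'I_5 2.
Definition grotzsch_adj : rel grotzsch_vertex := @myc_adj _ (@cycle_adj 5) 2.

(* Symmetric shift graph S_m on ordered pairs (i,j) of distinct elements of {0..m-1}
   (indices shifted from {1..m}). *)
Definition shift_vertex (m : nat) : finType := {p : 'I_m * 'I_m | p.1 != p.2}.

Definition shift_adj (m : nat) : rel (shift_vertex m) :=
  fun x y => ((val x).2 == (val y).1) || ((val x).1 == (val y).2).

(* Main.v *)
Require Import Defs.
From mathcomp Require Import all_boot.

Definition P (a b : nat) (ha : a < 4) (hb : b < 4) (h : (a != b)) : shift_vertex 4 :=
  @Sub _ _ (shift_vertex 4) (@Ordinal 4 a ha, @Ordinal 4 b hb) h.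

Definition fmap (x : grotzsch_vertex) : shift_vertex 4 :=
  match x with
  | None => @P 2 0 erefl erefl erefl
  | Some (v, i) =>
    match nat_of_ord v, nat_of_ord i with
    | 0, 0 => @P 0 1 erefl erefl erefl | 0, _ => @P 0 1 erefl erefl erefl
    | 1, 0 => @P 1 0 erefl erefl erefl | 1, _ => @P 1 2 erefl erefl erefl
    | 2, 0 => @P 3 1 erefl erefl erefl | 2, _ => @P 0 2 erefl erefl erefl
    | 3, 0 => @P 2 3 erefl erefl erefl | 3, _ => @P 0 3 erefl erefl erefl
    | _, 0 => @P 3 0 erefl erefl erefl | _, _ => @P 1 2 erefl erefl erefl
    end
  end.

Theorem mainTheorem6 :
  exists f : grotzsch_vertex -> shift_vertex 4,
    is_hom grotzsch_adj (@shift_adj 4) f.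
Proof.
exists fmap => x y H.
move: x y H => [[[v Hv] [i Hi]]|] [[[w Hw] [j Hj]]|];
  try (case: v Hv => [|[|[|[|[|v]]]]] Hv //);
  try (case: w Hw => [|[|[|[|[|w]]]]] Hw //);
  try (case: i Hi => [|[|i]] Hi //);
  try (case: j Hj => [|[|j]] Hj //);
  vm_compute; by [].
Qed.
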